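(* Let $I$ be a nonzero ideal of $\mathbb{Z}[\zeta_8]$. Then there exists a generator $\alpha'$ of $I$ (i.e. $I=(\alpha')$) which is a shortest nonzero vector of $I$ under the canonical embedding, i.e. $\|\Sigma_{\mathbb{Q}(\zeta_8)}(\alpha')\|\le\|\Sigma_{\mathbb{Q}(\zeta_8)}(\gamma)\|$ for every nonzero $\gamma\in I$.
   Context: $\zeta_8=e^{2\pi i/8}$. For a number field $\mathbb{K}$ with complex embeddings $\varphi_1,\dots,\varphi_t$ (all of them), the canonical embedding is $\Sigma_{\mathbb{K}}(x)=(\varphi_1(x),\dots,\varphi_t(x))$ with $\|\Sigma_{\mathbb{K}}(x)\|^2=\sum_j|\varphi_j(x)|^2$. *)

(* Defs.v *)
(* Z[zeta_8] modelled concretely in the power basis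
   1, z, z^2, z^3 with z^4 = -1; complex embeddings go into algC. *)
From mathcomp Require Import all_boot all_order all_algebra all_field.
Set Implicit Arguments. Unset Strict Implicit. Unset Printing Implicit Defensive.
Import Order.TTheory GRing.Theory Num.Theory.
Local Open Scope ring_scope.

(* an element a0 + a1 z + a2 z^2 + a3 z^3 of Z[zeta_8] *)
Definition Z8 : Type := (int * int * int * int)%type.

Definition z8zero : Z8 := (0, 0, 0, 0).

Definition z8add (x y : Z8) : Z8 :=
  let: (a0, a1, a2, a3) := x in let: (b0, b1, b2, b3) := y in
  (a0 + b0, a1 + b1, a2 + b2, a3 + b3).

(* multiplication modulo z^4 = -1 *)
Definition z8mul (x y : Z8) : Z8 :=
  let: (a0, a1, a2, a3) := x in let: (b0, b1, b2, b3) := y in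
  (a0 * b0 - a1 * b3 - a2 * b2 - a3 * b1,
   a0 * b1 + a1 * b0 - a2 * b3 - a3 * b2,
   a0 * b2 + a1 * b1 + a2 * b0 - a3 * b3,
   a0 * b3 + a1 * b2 + a2 * b1 + a3 * b0).

Definition is_ideal (I : Z8 -> Prop) : Prop :=
  [/\ I z8zero,
      (forall x y, I x -> I y -> I (z8add x y)) &
      (forall r x, I x -> I (z8mul r x))].

Definition generates (a : Z8) (I : Z8 -> Prop) : Prop :=
  forall x, I x <-> exists r, x = z8mul r a.

Definition zeta8 : algC := (1 + 'i) / sqrtC 2.

(* the complex embedding sending zeta_8 to zeta_8^k (k odd) *)
Definition z8emb (k : nat) (x : Z8) : algC :=
  let: (a0, a1, a2, a3) := x in
  a0%:~R + a1%:~R * zeta8 ^+ k + a2%:~R * zeta8 ^+ (2 * k)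
    + a3%:~R * zeta8 ^+ (3 * k).

Definition canon_normsq (x : Z8) : algC :=
  \sum_(k <- [:: 1; 3; 5; 7]%N) `|z8emb k x| ^+ 2.

Definition canon_norm (x : Z8) : algC := sqrtC (canon_normsq x).

(* Main.v *)
Require Import Defs.
From mathcomp Require Import all_boot all_order all_algebra all_field.
From mathcomp Require Import ring lra zify.
Import Order.TTheory GRing.Theory Num.Theory.
Local Open Scope ring_scope.
From Stdlib Require Classical.

Definition Pf (x : Z8) : int :=
  let: (a0, a1, a2, a3) := x in a0*a0 + a1*a1 + a2*a2 + a3*a3.
Definition Qf (x : Z8) : int :=
  let: (a0, a1, a2, a3) := x in a0*a1 + a1*a2 + a2*a3 - a3*a0.
Definition Nf (x : Z8) : int := Pf x * Pf x - 2 * (Qf x * Qf x).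

Ltac dz x := let a0 := fresh "a" in let a1 := fresh "a" in
  let a2 := fresh "a" in let a3 := fresh "a" in case: x => [[[a0 a1] a2] a3].

Lemma PM x y : Pf (z8mul x y) = Pf x * Pf y + 2 * (Qf x * Qf y).
Proof. dz x; dz y; rewrite /=; ring. Qed.
Lemma QM x y : Qf (z8mul x y) = Pf x * Qf y + Qf x * Pf y.
Proof. dz x; dz y; rewrite /=; ring. Qed.
Lemma NM x y : Nf (z8mul x y) = Nf x * Nf y.
Proof. rewrite /Nf PM QM; ring. Qed.

Definition s3 (x : Z8) : Z8 := let: (a0, a1, a2, a3) := x in (a0, a3, -a2, a1).
Definition s5 (x : Z8) : Z8 := let: (a0, a1, a2, a3) := x in (a0, -a1, a2, -a3).
Definition s7 (x : Z8) : Z8 := let: (a0, a1, a2, a3) := x in (a0, -a3, -a2, -a1).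
Definition cj x := z8mul (s3 x) (z8mul (s5 x) (s7 x)).

Lemma cjE x : z8mul x (cj x) = (Nf x, 0, 0, 0).
Proof. dz x; rewrite /cj /Nf /=; congr (_, _, _, _); ring. Qed.

Lemma mulA x y z : z8mul x (z8mul y z) = z8mul (z8mul x y) z.
Proof. dz x; dz y; dz z; rewrite /=; congr (_, _, _, _); ring. Qed.
Lemma mulC x y : z8mul x y = z8mul y x.
Proof. dz x; dz y; rewrite /=; congr (_, _, _, _); ring. Qed.
Lemma mul1 x : z8mul (1, 0, 0, 0) x = x.
Proof. dz x; rewrite /=; congr (_, _, _, _); ring. Qed.
Lemma mul0 x : z8mul z8zero x = z8zero.
Proof. dz x; rewrite /=; congr (_, _, _, _); ring. Qed.

Lemma P_ge0 x : 0 <= Pf x.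
Proof. dz x; rewrite /=; nia. Qed.

Lemma P_eq0 x : Pf x = 0 -> x = z8zero.
Proof. dz x; rewrite /= => h. have [-> -> -> ->] : [/\ a = 0, a0 = 0, a1 = 0 & a2 = 0] by split; nia. by []. Qed.

Lemma N_sos x : Nf x = let: (a0, a1, a2, a3) := x in
  (a0*a0 - a2*a2 + 2*a1*a3)^+2 + (2*a0*a2 - a1*a1 + a3*a3)^+2.
Proof. dz x; rewrite /Nf /=; ring. Qed.

Lemma N_ge0 x : 0 <= Nf x.
Proof. rewrite N_sos; dz x; nia. Qed.

Lemma sqrt2_nat (p : nat) : forall q : nat, (p * p = 2 * (q * q))%N -> p = 0%N.
Proof.
elim: p {-2}p (leqnn p) => [|n IH] p hp q h; first by case: p hp h.
case: (p =P 0%N) => // p0.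
have pe : (p %% 2 = 0)%N.
  case: (p %% 2 =P 0)%N => // h1; exfalso.
  have h2 : (p = 2 * (p %/ 2) + 1)%N by lia.
  set k := (p %/ 2)%N in h2; rewrite h2 in h; nia.
have pk : (p = 2 * (p %/ 2))%N by lia.
set k := (p %/ 2)%N in pk.
have hq : (q * q = 2 * (k * k))%N by rewrite pk in h; nia.
have qlt : (q <= n)%N by nia.
have := IH q qlt k hq; nia.
Qed.

Lemma sqrt2_int (p q : int) : p * p = 2 * (q * q) -> p = 0.
Proof.
move=> h; apply/eqP; rewrite -absz_eq0; apply/eqP.
apply: (@sqrt2_nat _ `|q|%N).
by have := congr1 absz h; rewrite !abszM.
Qed.

Lemma N_pos x : x <> z8zero -> 0 < Nf x.
Proof.
move=> nx; rewrite lt0r N_ge0 andbT; apply/eqP => h; apply: nx; apply: P_eq0.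
by apply: (@sqrt2_int _ (Qf x)); move: h; rewrite /Nf; lia.
Qed.
Lemma z2 : zeta8 ^+ 2 = 'i.
Proof.
have hs : sqrtC 2 ^+ 2 = 2 :> algC by rewrite sqrtCK.
have h2 : (2 : algC) != 0 by rewrite pnatr_eq0.
rewrite /zeta8 expr_div_n hs.
have -> : (1 + 'i) ^+ 2 = 1 + 'i ^+ 2 + 2 * 'i :> algC by ring.
by rewrite sqrCi addrN add0r mulrAC divff // mul1r.
Qed.

Lemma z4 : zeta8 ^+ 4 = -1.
Proof. by rewrite (_ : 4 = 2 * 2)%N // exprM z2 sqrCi. Qed.

Lemma zS4 n : zeta8 ^+ (n + 4) = - zeta8 ^+ n.
Proof. by rewrite exprD z4 mulrN1. Qed.

Lemma zconj : zeta8^* = - zeta8 ^+ 3.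
Proof.
have hs0 : 0 <= sqrtC 2 :> algC by rewrite sqrtC_ge0 ler0n.
have hs : sqrtC 2 != 0 :> algC by rewrite sqrtC_eq0 pnatr_eq0.
rewrite exprS z2 /zeta8 rmorphM fmorphV /= rmorphD /= rmorph1 conjCi (geC0_conj hs0).
rewrite mulrAC -mulNr; congr (_ / _).
have -> : - ((1 + 'i) * 'i) = - 'i - 'i^+2 :> algC by ring.
rewrite sqrCi; ring.
Qed.

Lemma gen_sq (t b0 b1 b2 b3 : algC) : t ^+ 4 = -1 ->
  (b0 + b1*t + b2*t^+2 + b3*t^+3) * (b0 - b3*t - b2*t^+2 - b1*t^+3) =
  (b0*b0 + b1*b1 + b2*b2 + b3*b3) + (b0*b1 + b1*b2 + b2*b3 - b3*b0)*(t - t^+3).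
Proof.
move=> h4.
have E : (b0 + b1*t + b2*t^+2 + b3*t^+3) * (b0 - b3*t - b2*t^+2 - b1*t^+3) =
  (b0*b0 + b1*b1 + b2*b2 + b3*b3) + (b0*b1 + b1*b2 + b2*b3 - b3*b0)*(t - t^+3)
  + (t^+4 + 1) * (- (b1*b1+b2*b2+b3*b3) - (b1*b2+b2*b3)*t - b1*b3*t^+2) by ring.
by rewrite E h4 addNr mul0r addr0.
Qed.

Lemma emb_sq (k : nat) (x : Z8) : (zeta8 ^+ k) ^+ 4 = -1 ->
  (zeta8 ^+ k)^* = - (zeta8 ^+ k) ^+ 3 ->
  `|z8emb k x| ^+ 2 = (Pf x)%:~R + (Qf x)%:~R * (zeta8 ^+ k - (zeta8 ^+ k) ^+ 3).
Proof.
case: x => [[[a0 a1] a2] a3] h4 hc.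
rewrite normCK /z8emb.
set t := zeta8 ^+ k in h4 hc *.
have -> : zeta8 ^+ (2 * k) = t ^+ 2 by rewrite mulnC exprM.
have -> : zeta8 ^+ (3 * k) = t ^+ 3 by rewrite mulnC exprM.
have ht2 : (t^+2)^* = - t^+2.
  by rewrite rmorphXn /= hc sqrrN -exprM (_ : (3 * 2 = 2 + 4)%N) // exprD h4 mulrN1.
have ht3 : (t^+3)^* = - t.
  rewrite rmorphXn /= hc exprNn -exprM (_ : 3 * 3 = 1 + 4 + 4)%N // !exprD h4.
  by rewrite expr1 -signr_odd /=; ring.
have e : forall (a : int) (u : algC), (a%:~R * u)^* = a%:~R * u^*.
  by move=> a u; rewrite rmorphM /= rmorph_int.
rewrite !rmorphD /= !e rmorph_int hc ht2 ht3.
rewrite (_ : forall a b c d : algC, a + b * - (t^+3) + c * - t^+2 + d * - t = a - d*t - c*t^+2 - b*t^+3); last by move=> *; ring.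
by rewrite gen_sq // /Pf /Qf; ring.
Qed.

Lemma zk4 k : odd k -> (zeta8 ^+ k) ^+ 4 = -1.
Proof. by move=> ok; rewrite -exprM mulnC exprM z4 -signr_odd ok expr1. Qed.

Lemma zkc k : odd k -> (zeta8 ^+ k)^* = - (zeta8 ^+ k) ^+ 3.
Proof.
move=> ok; rewrite rmorphXn /= zconj exprNn -signr_odd ok expr1 mulN1r.
by rewrite -!exprM mulnC.
Qed.

Lemma normsqE x : canon_normsq x = 4 * (Pf x)%:~R.
Proof.
rewrite /canon_normsq !big_cons big_nil !emb_sq ?zk4 ?zkc //.
rewrite -!exprM /=.
rewrite (_ : zeta8 ^+ 5 = - zeta8 ^+ 1); last by rewrite -zS4.
rewrite (_ : zeta8 ^+ 7 = - zeta8 ^+ 3); last by rewrite -zS4.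
rewrite (_ : zeta8 ^+ 9 = zeta8 ^+ 1); last by rewrite (zS4 5) (zS4 1) opprK.
rewrite (_ : zeta8 ^+ 15 = - zeta8 ^+ 3); last by rewrite (zS4 11) (zS4 7) (zS4 3) opprK.
rewrite (_ : zeta8 ^+ 21 = - zeta8 ^+ 1); last by rewrite (zS4 17) (zS4 13) (zS4 9) (zS4 5) (zS4 1) !opprK.
ring.
Qed.
Lemma rem_bound (n r0 r1 r2 r3 : int) : 0 < n ->
  -n <= 2 * r0 < n -> -n <= 2 * r1 < n -> -n <= 2 * r2 < n -> -n <= 2 * r3 < n ->
  Nf (r0, r1, r2, r3) < n * n * (n * n).
Proof.
move=> n0 /andP[l0 u0] /andP[l1 u1] /andP[l2 u2] /andP[l3 u3].
have e0 : 4 * (r0 * r0) <= n * n by nia.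
have e1 : 4 * (r1 * r1) <= n * n by nia.
have e2 : 4 * (r2 * r2) <= n * n by nia.
have e3 : 4 * (r3 * r3) <= n * n by nia.
rewrite /Nf /=.
set P := r0*r0 + r1*r1 + r2*r2 + r3*r3.
set Q := r0*r1 + r1*r2 + r2*r3 - r3*r0.
have P0 : 0 <= P by rewrite /P; nia.
have Pn : P <= n * n by rewrite /P; lia.
case: (ltrP P (n * n)) => hP.
  have : P * P < n * n * (n * n) by nia.
  nia.
have hPe : P = n * n by lia.
have f0 : 4 * (r0 * r0) = n * n by rewrite /P in hPe; lia.
have f1 : 4 * (r1 * r1) = n * n by rewrite /P in hPe; lia.
have f2 : 4 * (r2 * r2) = n * n by rewrite /P in hPe; lia.
have f3 : 4 * (r3 * r3) = n * n by rewrite /P in hPe; lia.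
have g0 : 2 * r0 = - n by nia.
have g1 : 2 * r1 = - n by nia.
have g2 : 2 * r2 = - n by nia.
have g3 : 2 * r3 = - n by nia.
have hQ : 2 * Q = n * n by rewrite /Q; nia.
nia.
Qed.
Lemma round (w n : int) : 0 < n -> exists q, -n <= 2 * (w - n * q) < n.
Proof.
move=> n0; exists ((2 * w + n) %/ (2 * n))%Z.
have := divz_eq (2 * w + n) (2 * n).
have h2n : 2 * n != 0 by lia.
have h2p : 0 < 2 * n by lia.
have := modz_ge0 (2 * w + n) h2n.
have := ltz_pmod (2 * w + n) h2p.
set q := ((2 * w + n) %/ (2 * n))%Z; set m := ((2 * w + n) %% (2 * n))%Z.
move=> h1 h2 h3; apply/andP; split; nia.
Qed.

Definition z8neg (x : Z8) : Z8 := let: (a0, a1, a2, a3) := x in (-a0, -a1, -a2, -a3).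

Lemma decomp x q g : x = z8add (z8add x (z8mul (z8neg q) g)) (z8mul q g).
Proof. dz x; dz q; dz g; rewrite /=; congr (_, _, _, _); ring. Qed.

Lemma add0 y : z8add z8zero y = y.
Proof. dz y; rewrite /=; congr (_, _, _, _); ring. Qed.

Lemma mulDl x y z : z8mul (z8add x y) z = z8add (z8mul x z) (z8mul y z).
Proof. dz x; dz y; dz z; rewrite /=; congr (_, _, _, _); ring. Qed.

Lemma euclid I g : is_ideal I -> I g -> g <> z8zero ->
  (forall y, I y -> y <> z8zero -> Nf g <= Nf y) -> generates g I.
Proof.
move=> [I0 Iadd Imul] Ig g0 gmin x; split; last first.
  by move=> [r ->]; apply: Imul.
move=> Ix.
have n0 := @N_pos g g0; set n := Nf g in n0 gmin.
case E : (z8mul x (cj g)) => [[[w0 w1] w2] w3].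
have [q0 h0] := @round w0 n n0.
have [q1 h1] := @round w1 n n0.
have [q2 h2] := @round w2 n n0.
have [q3 h3] := @round w3 n n0.
set q : Z8 := (q0, q1, q2, q3).
set d := z8add x (z8mul (z8neg q) g).
have Id : I d by apply: Iadd => //; apply: Imul.
have Ed : z8mul d (cj g) = (w0 - n * q0, w1 - n * q1, w2 - n * q2, w3 - n * q3).
  rewrite /d mulDl -mulA cjE E /= /n.
  congr (_, _, _, _); ring.
have Nr := @rem_bound n _ _ _ _ n0 h0 h1 h2 h3.
rewrite -Ed NM in Nr.
have Ncj : n * Nf (cj g) = n * n * (n * n).
  by rewrite /n -NM cjE /Nf /=; ring.
have Ncj0 := N_ge0 (cj g).
have d0 : d = z8zero.
  case: (d =P z8zero) => // dn.
  have := gmin d Id dn; nia.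
exists q; rewrite (decomp x q g) -/d d0 add0 //.
Qed.
Lemma min_ex I : (exists x, I x /\ x <> z8zero) ->
  exists g, [/\ I g, g <> z8zero & forall y, I y -> y <> z8zero -> Nf g <= Nf y].
Proof.
move=> [x [Ix x0]].
suff H : forall k (x : Z8), (`|Nf x| <= k)%N -> I x -> x <> z8zero ->
  exists g, [/\ I g, g <> z8zero & forall y, I y -> y <> z8zero -> Nf g <= Nf y].
  exact: (H _ x (leqnn _) Ix x0).
elim=> [|k IH] z hz Iz z0.
  have := @N_pos z z0; move: hz; rewrite leqn0 absz_eq0 => /eqP ->; by [].
case: (Classical_Prop.classic (forall y, I y -> y <> z8zero -> Nf z <= Nf y)) => hm.
  by exists z.
have [y hy] := Classical_Pred_Type.not_all_ex_not _ _ hm.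
case: (Classical_Prop.classic (I y)) => Iy; last by exfalso; apply: hy.
case: (Classical_Prop.classic (y = z8zero)) => y0; first by exfalso; apply: hy.
have lt : Nf y < Nf z.
  rewrite ltNge; apply/negP => h; apply: hy => _ _; exact: h.
apply: (IH y) => //.
have := @N_pos y y0; have := @N_pos z z0; move: hz lt; lia.
Qed.

Lemma gen_unit I a v v' : z8mul v' v = (1, 0, 0, 0) -> generates a I ->
  generates (z8mul v a) I.
Proof.
move=> h G x; rewrite G; split => [[r ->]|[r ->]].
  by exists (z8mul r v'); rewrite -mulA (mulA v') h mul1.
by exists (z8mul r v); rewrite mulA.
Qed.

Lemma reduce I a : generates a I -> exists a', generates a' I /\ 2 * `|Qf a'| <= Pf a'.
Proof.
suff H : forall k a, (`|Pf a| <= k)%N -> generates a I ->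
    exists a', generates a' I /\ 2 * `|Qf a'| <= Pf a'.
  by move=> G; apply: (H _ a (leqnn _)).
elim=> [|k IH] b hb G.
  exists b; split => //; move: hb; rewrite leqn0 absz_eq0 => /eqP hP.
  by rewrite (@P_eq0 b hP) /= normr0.
case: (lerP (2 * `|Qf b|) (Pf b)) => hq; first by exists b.
have Pb0 := P_ge0 b.
case: (ltrP 0 (Qf b)) => hs.
  pose ui : Z8 := (-1, 1, 0, -1).
  have G' : generates (z8mul ui b) I by apply: (@gen_unit _ _ _ (1, 1, 0, -1)).
  apply: (IH _ _ G').
  have := P_ge0 (z8mul ui b); rewrite PM /=; move: hq hb hs Pb0; lia.
pose u : Z8 := (1, 1, 0, -1).
have G' : generates (z8mul u b) I by apply: (@gen_unit _ _ _ (-1, 1, 0, -1)).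
apply: (IH _ _ G').
have := P_ge0 (z8mul u b); rewrite PM /=; move: hq hb hs Pb0; lia.
Qed.

Lemma canon_le a g : Pf a <= Pf g -> canon_norm a <= canon_norm g.
Proof.
move=> h; rewrite /canon_norm !normsqE ler_sqrtC ?nnegrE.
- by rewrite ler_pM2l ?ltr0n // ler_int.
- by rewrite mulr_ge0 ?ler0n // ler0z P_ge0.
- by rewrite mulr_ge0 ?ler0n // ler0z P_ge0.
Qed.

Theorem theorem5 (I : Z8 -> Prop) :
  is_ideal I -> (exists x, I x /\ x <> z8zero) ->
  exists a : Z8, generates a I /\
    (forall g : Z8, I g -> g <> z8zero -> canon_norm a <= canon_norm g).
Proof.
move=> hI hex.
have [g [Ig g0 gmin]] := @min_ex I hex.
have G := @euclid I g hI Ig g0 gmin.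
have [a [Ga ha]] := @reduce I g G.
exists a; split => // y Iy y0.
apply: canon_le.
have [r er] := (Ga y).1 Iy.
have r0 : r <> z8zero by move=> r0; apply: y0; rewrite er r0 mul0.
have Nr := @N_pos r r0.
have Pr := P_ge0 r.
have Pa := P_ge0 a.
rewrite er PM.
move: Nr; rewrite /Nf => Nr.
have hb : `|Qf r| + 1 <= Pf r by nia.
have hc : - (`|Qf r| * Pf a) <= 2 * (Qf r * Qf a) by nia.
nia.
Qed.
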